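(* Let $E$ be the elliptic curve $Y^2+11Y=X^3+11X^2+33X$ over $\mathbb{Q}$ and $t=Y-\frac{11}{X}$. For every point $P=(x,y)\in E(\mathbb{Q})$ with $x\neq 0$, we have $H_X(P)\le 7\,H_t(P)^{2/3}$, i.e. $h_X(P)\le \tfrac23 h_t(P)+\log 7$. More precisely, for every finite prime $p$, $\max(1,|x|_p)\le \max(1,|y-\tfrac{11}{x}|_p)^{2/3}$, and at the archimedean place $\max(1,|x|)\le 7\max(1,|y-\tfrac{11}{x}|)^{2/3}$.
   Context: For a non-constant function $f$ on $E$ and $P\in E(\mathbb{Q})$ with $f(P)$ finite, $H_f(P)=\prod_{p\le\infty}\max(1,|f(P)|_p)$ and $h_f(P)=\log H_f(P)$. *)

(* Defs.v *)
From HB Require Import structures.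
From mathcomp Require Import all_boot all_order all_algebra.
Set Implicit Arguments. Unset Strict Implicit. Unset Printing Implicit Defensive.
Import Order.TTheory GRing.Theory Num.Theory.
Local Open Scope ring_scope.

(* |r|_p for a prime p: p^(-v_p(r)), with |0|_p = 0.  Here
   r = numq r / denq r in lowest terms, so v_p(r) = v_p(num) - v_p(den). *)
Definition padic_abs (p : nat) (r : rat) : rat :=
  if r == 0 then 0
  else ((p ^ logn p `|denq r|)%N)%:R / ((p ^ logn p `|numq r|)%N)%:R.

Definition loc_fin (p : nat) (r : rat) : rat := Num.max 1 (padic_abs p r).
Definition loc_inf (r : rat) : rat := Num.max 1 `|r|.

(* H(r) = prod_{p <= oo} max(1,|r|_p).  All primes not dividing
   numq r * denq r have |r|_p = 1, so the product over all places equals the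
   (finite) product over the archimedean place and the primes dividing
   numq r * denq r. *)
Definition height (r : rat) : rat :=
  loc_inf r * \prod_(p <- primes (`|numq r| * `|denq r|)%N) loc_fin p r.

Definition onE (x y : rat) : Prop :=
  y ^+ 2 + 11 * y = x ^+ 3 + 11 * x ^+ 2 + 33 * x.

Definition tfun (x y : rat) : rat := y - 11 / x.

(* Main.v *)
Require Import Defs.
From HB Require Import structures.
From mathcomp Require Import all_boot all_order all_algebra.
From mathcomp Require Import ring lra zify.
Import Order.TTheory GRing.Theory Num.Theory.
Local Open Scope ring_scope.

Lemma loc_finE (p : nat) (r : rat) :
  loc_fin p r = ((p ^ logn p `|denq r|)%N)%:R.
Proof.
rewrite /loc_fin /padic_abs.
have [->|r0] := eqVneq r 0.
  by rewrite (_ : denq 0 = 1) // logn1 expn0 max_l.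
have cop := coprime_num_den r.
case Hd: (logn p `|denq r|) => [|e].
  rewrite expn0 max_l //.
  rewrite ler_pdivrMr ?mul1r ?ler1n ?ltr0n ?pfactor_gt0 //.
have : (0 < logn p `|denq r|)%N by rewrite Hd.
rewrite logn_gt0 mem_primes => /and3P [pp _ pd].
have cpn : coprime p `|numq r|.
  rewrite coprime_sym; exact: (coprime_dvdr pd cop).
rewrite (logn_coprime cpn) expn0 divr1 max_r // ler1n expn_gt0.
by rewrite prime_gt0.
Qed.

Lemma prod_primes_sub m n : (0 < m)%N -> (n %| m)%N ->
  (\prod_(p <- primes m) p ^ logn p n)%N = n.
Proof.
move=> m0 nm; have n0 : (0 < n)%N := dvdn_gt0 m0 nm.
rewrite (bigID (fun p => p \in primes n)) /=.
rewrite [X in (_ * X)%N]big1 ?muln1; last first.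
  by move=> p; rewrite -logn_gt0 lt0n negbK => /eqP ->.
rewrite -big_filter (perm_big (primes n)).
  by symmetry; rewrite {1}(prod_prime_decomp n0) prime_decompE big_map.
apply: uniq_perm; [exact: filter_uniq (primes_uniq _) | exact: primes_uniq |].
move=> p; rewrite mem_filter andb_idr //.
rewrite !mem_primes => /and3P [pp _ pn]; rewrite pp m0.
exact: dvdn_trans pn nm.
Qed.

Lemma heightE (r : rat) : height r = loc_inf r * (`|denq r|%N)%:R.
Proof.
rewrite /height; congr (_ * _).
have [->|r0] := eqVneq r 0; first by rewrite (_ : numq 0 = 0) // (_ : denq 0 = 1) // big_nil.
under eq_bigr do rewrite loc_finE.
rewrite -natr_prod prod_primes_sub //; last exact: dvdn_mull.
rewrite muln_gt0 absz_gt0 numq_eq0 (negbTE r0) /=.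
by rewrite absz_gt0 gt_eqF // denq_gt0.
Qed.

Lemma powle (n : nat) (a b : rat) : 0 <= a -> a <= b -> a ^+ n <= b ^+ n.
Proof. move=> a0 ab; apply: lerXn2r; rewrite ?nnegrE //; exact: le_trans a0 ab. Qed.

Lemma arch (x y : rat) : onE x y -> x != 0 ->
  loc_inf x ^+ 3 <= 7 ^+ 3 * loc_inf (tfun x y) ^+ 2.
Proof.
rewrite /onE /loc_inf /tfun => hE hx0.
set t := y - 11 / x.
have h1t : 1 <= Num.max 1 `|t| by rewrite le_max lexx.
have [hx7|hx7] := lerP `|x| 7.
  have hm : Num.max 1 `|x| <= 7 by rewrite ge_max hx7 andbT.
  have hm0 : 0 <= Num.max 1 `|x| by rewrite le_max ler01.
  have h1 : Num.max 1 `|x| ^+ 3 <= 7 ^+ 3 by apply: powle.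
  apply: (le_trans h1); rewrite -[X in X <= _]mulr1.
  apply: ler_wpM2l; first exact: exprn_ge0.
  by rewrite expr_ge1 // (le_trans ler01 h1t).
have xpos : 7 < x.
  move: hx7; rewrite ltr_normr => /orP [//|hn].
  have : x <= -7 by lra.
  move=> hxl; exfalso.
  have : x ^+ 3 + 11 * x ^+ 2 + 33 * x + 35 = (x + 7) * (x ^+ 2 + 4 * x + 5) by ring.
  have : 0 < x ^+ 2 + 4 * x + 5.
    have -> : x ^+ 2 + 4 * x + 5 = (x + 2) ^+ 2 + 1 by ring.
    by rewrite ltr_pwDr // sqr_ge0.
  move=> hq he.
  have : (x + 7) * (x ^+ 2 + 4 * x + 5) <= 0.
    by rewrite pmulr_lle0 //; lra.
  have : 0 <= (y + 11/2) ^+ 2 by rewrite sqr_ge0.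
  have -> : (y + 11/2) ^+ 2 = y ^+ 2 + 11 * y + 121/4 by field.
  lra.
have -> : Num.max 1 `|x| = x.
  have xp : 0 < x by lra.
  by rewrite (gtr0_norm xp) max_r //; lra.
have h2 : `|t| ^+ 2 <= Num.max 1 `|t| ^+ 2.
  apply: powle; first exact: normr_ge0.
  by rewrite le_max lexx orbT.
apply: (le_trans _ (ler_wpM2l _ h2)); last by apply: exprn_ge0; lra.
set u := `|t|.
have u0 : 0 <= u := normr_ge0 _.
have xp : 0 < x by lra.
have w0 : 0 < 11 / x by rewrite divr_gt0 //; lra.
have w1 : 11 / x <= 11 / 7.
  rewrite ler_pdivrMr // mulrC -ler_pdivrMr; lra.
have hy : y = t + 11 / x by rewrite /t; ring.
have hyabs : `|y| <= u + 11 / 7.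
  rewrite hy; apply: (le_trans (ler_normD _ _)).
  rewrite (gtr0_norm w0) (_ : `|t| = u) //; lra.
have hC : x ^+ 3 <= y ^+ 2 + 11 * y.
  rewrite hE; have : 0 <= 11 * x ^+ 2 + 33 * x.
    by apply: addr_ge0; apply: mulr_ge0; try apply: exprn_ge0; lra.
  lra.
have hy2 : y ^+ 2 + 11 * y <= (`|y| + 11/2) ^+ 2.
  have h3 : y ^+ 2 = `|y| ^+ 2 by rewrite real_normK // num_real.
  have : - `|y| <= y <= `|y| by rewrite -ler_norml.
  move=> /andP [h1 h2'].
  have -> : (`|y| + 11/2) ^+ 2 = `|y| ^+ 2 + 11 * `|y| + 121/4 by field.
  lra.
have ya0 : 0 <= `|y| := normr_ge0 _.
have hx3 : x ^+ 3 <= (u + 99/14) ^+ 2.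
  apply: (le_trans hC); apply: (le_trans hy2).
  apply: powle; lra.
have x3 : 7 ^+ 3 <= x ^+ 3 by apply: powle; lra.
rewrite real_leNgt ?num_real //; apply/negP => hlt.
have hlt' : 343 * u ^+ 2 < (u + 99/14) ^+ 2.
  have e : (7 : rat) ^+ 3 = 343 by lra.
  rewrite -e; exact: (lt_le_trans hlt hx3).
have hu : 17 * u < 99/14 by nra.
have : (u + 99/14) ^+ 2 <= (18/17 * (99/14)) ^+ 2 by apply: powle; lra.
lra.
Qed.

Lemma coprimez_MDl (q m n : int) : coprimez m (q * m + n) = coprimez m n.
Proof. by rewrite /coprimez gcdzMDl. Qed.

Lemma key_int (a b c d N D : int) : coprimez a b -> coprimez c d ->
  b ^+ 3 * c * (c + 11 * d) = d ^+ 2 * a * (a ^+ 2 + 11 * a * b + 33 * b ^+ 2) ->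
  N * (a * d) = (c * a - 11 * b * d) * D ->
  (b ^+ 3 %| D ^+ 2)%Z.
Proof.
move=> cab ccd E EN.
have h1 : (d ^+ 2 %| b ^+ 3)%Z.
  have : (d ^+ 2 %| b ^+ 3 * (c * (c + 11 * d)))%Z.
    by rewrite mulrA E; apply: dvdz_mulr; apply: dvdz_mulr; exact: dvdzz.
  rewrite Gauss_dvdzl // coprimez_pexpl // coprimezMr coprimez_sym ccd /=.
  by rewrite addrC coprimez_MDl coprimez_sym.
have h2 : (b ^+ 3 %| d ^+ 2)%Z.
  have : (b ^+ 3 %| d ^+ 2 * (a * (a ^+ 2 + 11 * a * b + 33 * b ^+ 2)))%Z.
    by rewrite mulrA -E; apply: dvdz_mulr; apply: dvdz_mulr; exact: dvdzz.
  rewrite Gauss_dvdzl // coprimez_pexpl // coprimezMr coprimez_sym cab /=.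
  rewrite (_ : a ^+ 2 + 11 * a * b + 33 * b ^+ 2 = (11 * a + 33 * b) * b + a ^+ 2);
    last by ring.
  by rewrite coprimez_MDl coprimezXr // coprimez_sym.
have cad2 : coprimez a (d ^+ 2).
  rewrite coprimezE; apply: (coprime_dvdr h1); rewrite -coprimezE.
  exact: coprimezXr.
have cda : coprimez d a by rewrite coprimez_sym -(@coprimez_pexpr 2).
have cdM : coprimez d (c * a - 11 * b * d).
  rewrite (_ : c * a - 11 * b * d = (- (11 * b)) * d + c * a); last by ring.
  by rewrite coprimez_MDl coprimezMr cda andbT coprimez_sym.
have hdD : (d %| D)%Z.
  have : (d %| (c * a - 11 * b * d) * D)%Z.
    by rewrite -EN; apply: dvdz_mull; apply: dvdz_mull; exact: dvdzz.
  by rewrite Gauss_dvdzr.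
exact: dvdz_trans h2 (dvdz_exp2r 2 hdD).
Qed.

Theorem mainTheorem5 (x y : rat) :
  onE x y -> x != 0 ->
  [/\ height x ^+ 3 <= 7 ^+ 3 * height (tfun x y) ^+ 2,
      (forall p : nat, prime p ->
         loc_fin p x ^+ 3 <= loc_fin p (tfun x y) ^+ 2)
    & loc_inf x ^+ 3 <= 7 ^+ 3 * loc_inf (tfun x y) ^+ 2].
Proof.
move=> hE hx0.
have ha : (numq x)%:~R = x * (denq x)%:~R := numqE x.
have hc : (numq y)%:~R = y * (denq y)%:~R := numqE y.
have hN : (numq (tfun x y))%:~R = tfun x y * (denq (tfun x y))%:~R := numqE _.
have E : denq x ^+ 3 * numq y * (numq y + 11 * denq y) =
   denq y ^+ 2 * numq x * (numq x ^+ 2 + 11 * numq x * denq x + 33 * denq x ^+ 2).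
  apply: (@intr_inj rat).
  have -> : ((denq x ^+ 3 * numq y * (numq y + 11 * denq y) : int)%:~R : rat) =
     (denq x)%:~R ^+ 3 * (numq y)%:~R * ((numq y)%:~R + 11 * (denq y)%:~R) by ring.
  have -> : ((denq y ^+ 2 * numq x * (numq x ^+ 2 + 11 * numq x * denq x + 33 * denq x ^+ 2) : int)%:~R : rat) =
     (denq y)%:~R ^+ 2 * (numq x)%:~R * ((numq x)%:~R ^+ 2 + 11 * (numq x)%:~R * (denq x)%:~R + 33 * (denq x)%:~R ^+ 2) by ring.
  rewrite ha hc.
  transitivity ((denq x)%:~R ^+ 3 * (denq y)%:~R ^+ 2 * (y ^+ 2 + 11 * y) : rat); first by ring.
  rewrite /onE in hE; rewrite hE; ring.
have EN : numq (tfun x y) * (numq x * denq y) =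
   (numq y * numq x - 11 * denq x * denq y) * denq (tfun x y).
  apply: (@intr_inj rat).
  have -> : ((numq (tfun x y) * (numq x * denq y) : int)%:~R : rat) =
     (numq (tfun x y))%:~R * ((numq x)%:~R * (denq y)%:~R) by ring.
  have -> : (((numq y * numq x - 11 * denq x * denq y) * denq (tfun x y) : int)%:~R : rat) =
     ((numq y)%:~R * (numq x)%:~R - 11 * (denq x)%:~R * (denq y)%:~R) * (denq (tfun x y))%:~R by ring.
  rewrite ha hc hN /tfun; field; exact: hx0.
have cx : coprimez (numq x) (denq x) by rewrite coprimezE coprime_num_den.
have cy : coprimez (numq y) (denq y) by rewrite coprimezE coprime_num_den.
have hdivz := @key_int _ _ _ _ _ _ cx cy E EN.
have hdiv : (`|denq x| ^ 3 %| `|denq (tfun x y)| ^ 2)%N.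
  by move: hdivz; rewrite dvdzE !abszX.
have D0 : (0 < `|denq (tfun x y)| ^ 2)%N by rewrite expn_gt0 absz_gt0 gt_eqF // denq_gt0.
split.
- rewrite !heightE.
  have hB : ((`|denq x|%N)%:R : rat) ^+ 3 <= (`|denq (tfun x y)|%N)%:R ^+ 2.
    by rewrite -!natrX ler_nat; apply: dvdn_leq.
  have h0x : 0 <= loc_inf x by rewrite /loc_inf le_max ler01.
  have := ler_pM (exprn_ge0 3 h0x) (exprn_ge0 3 (ler0n _ _)) (@arch x y hE hx0) hB.
  move=> H; rewrite (exprMn 3) (exprMn 2) [X in _ <= X]mulrA; exact: H.
- move=> p pp; rewrite !loc_finE -!natrX ler_nat -!expnM.
  apply: leq_pexp2l; first exact: prime_gt0.
  have := dvdn_leq_log p D0 hdiv; rewrite !lognX; lia.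
- exact: arch.
Qed.
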